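(* If a finite simple graph $G$ with an even number of vertices is H$_2$--cordial, then the number of edges of $G$ is even.
   Context: For a positive integer $k$, an H$_k$--cordial labeling of a graph $G$ is a map $f:E(G)\to\mathbb{Z}$ such that, defining $f(v)=\sum_{e\in I(v)} f(e)$ for each vertex $v$ (where $I(v)$ is the set of edges incident to $v$), we have $1\le |f(e)|\le k$ for every edge $e$, $1\le |f(v)|\le k$ for every vertex $v$, and for each $i$ with $1\le i\le k$, $|e_f(i)-e_f(-i)|\le 1$ and $|v_f(i)-v_f(-i)|\le 1$; here $e_f(c)$ is the number of edges with label $c$ and $v_f(c)$ the number of vertices $v$ with $f(v)=c$. A graph is H$_k$--cordial if it admits an H$_k$--cordial labeling. *)

(* Defs.v *)
From mathcomp Require Import all_boot all_order all_algebra.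
Set Implicit Arguments. Unset Strict Implicit. Unset Printing Implicit Defensive.
Import Order.TTheory GRing.Theory Num.Theory.
Local Open Scope ring_scope.

Definition simple_graph (V : finType) (e : rel V) : Prop :=
  symmetric e /\ irreflexive e.

Definition edges (V : finType) (e : rel V) : {set {set V}} :=
  [set E : {set V} | [exists x, exists y, e x y && (E == [set x; y])]].

Definition inc_edges (V : finType) (e : rel V) (v : V) : {set {set V}} :=
  [set E in edges e | v \in E].

Definition vlab (V : finType) (e : rel V) (f : {set V} -> int) (v : V) : int :=
  \sum_(E in inc_edges e v) f E.

Definition ecount (V : finType) (e : rel V) (f : {set V} -> int) (c : int) : nat :=
  #|[set E in edges e | f E == c]|.
Definition vcount (V : finType) (e : rel V) (f : {set V} -> int) (c : int) : nat :=
  #|[set v : V | vlab e f v == c]|.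

(* H_k-cordial labeling (only values of f on edges matter) *)
Definition Hk_cordial_labeling (k : nat) (V : finType) (e : rel V)
    (f : {set V} -> int) : Prop :=
  (forall E, E \in edges e -> 1 <= `|f E| <= k%:Z) /\
  (forall v : V, 1 <= `|vlab e f v| <= k%:Z) /\
  (forall i : nat, (1 <= i <= k)%N ->
     `|(ecount e f i%:Z)%:Z - (ecount e f (- i%:Z))%:Z| <= 1 /\
     `|(vcount e f i%:Z)%:Z - (vcount e f (- i%:Z))%:Z| <= 1).

Definition Hk_cordial (k : nat) (V : finType) (e : rel V) : Prop :=
  exists f : {set V} -> int, Hk_cordial_labeling k e f.

(* Main.v *)
Require Import Defs.
From mathcomp Require Import all_boot all_order all_algebra zify.
Import Order.TTheory GRing.Theory Num.Theory.
Local Open Scope ring_scope.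
Lemma pw (x : int) : 1 <= `|x| <= 2 ->
  x = (x == 1)%:R - (x == -1)%:R + 2 * (x == 2)%:R - 2 * (x == -2)%:R /\
  1 = (x == 1)%:R + (x == -1)%:R + (x == 2)%:R + (x == -2)%:R :> int.
Proof. case: x => [[|[|[|n]]]|[|[|n]]] //=. Qed.
Lemma cnt (T : finType) (A : {pred T}) (g : T -> int) c :
  \sum_(x in A) ((g x == c)%:R : int) = (#|[set x in A | g x == c]|)%:R.
Proof.
transitivity (\sum_(x in A | g x == c) (1:int)).
  by rewrite big_mkcondr /=; apply: eq_bigr => x _; case: eqP.
rewrite sumr_const; congr (_ *+ _).
by apply: eq_card => x; rewrite !inE.
Qed.
Lemma cntT (T : finType) (g : T -> int) c :
  \sum_(x : T) ((g x == c)%:R : int) = (#|[set x | g x == c]|)%:R.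
Proof.
transitivity (\sum_(x | g x == c) (1:int)).
  by rewrite [RHS]big_mkcond /=; apply: eq_bigr => x _; case: eqP.
rewrite sumr_const; congr (_ *+ _).
by apply: eq_card => x; rewrite !inE.
Qed.
Lemma sumdec (T : finType) (A : {pred T}) (g : T -> int) :
  (forall x, x \in A -> 1 <= `|g x| <= 2) ->
  \sum_(x in A) g x = #|[set x in A | g x == 1]|%:R - #|[set x in A | g x == -1]|%:R
     + 2 * #|[set x in A | g x == 2]|%:R - 2 * #|[set x in A | g x == -2]|%:R /\
  (#|A|%:R : int) = #|[set x in A | g x == 1]|%:R + #|[set x in A | g x == -1]|%:R
     + #|[set x in A | g x == 2]|%:R + #|[set x in A | g x == -2]|%:R.
Proof.
move=> H; rewrite -!cnt !mulr_sumr -!sumrB -!big_split /= -?sumrB; split.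
  by apply: eq_bigr => x /H /pw [].
rewrite -sumr_const; apply: eq_bigr => x /H /pw [] _ //.
Qed.
Lemma hs (V : finType) (e : rel V) f : irreflexive e ->
  \sum_v vlab e f v = 2 * \sum_(E in edges e) f E.
Proof.
move=> irr; rewrite /vlab.
have st v : \sum_(E in inc_edges e v) f E =
   \sum_(E in edges e) (if v \in E then f E else 0).
  by rewrite -big_mkcondr; apply: eq_bigl => E; rewrite !inE.
under eq_bigr => v _ do rewrite st.
rewrite exchange_big /= mulr_sumr; apply: eq_bigr => E.
rewrite inE => /existsP [x /existsP [y /andP [exy /eqP ->]]].
rewrite -big_mkcond /= sumr_const cards2.
have -> : (x != y) by apply: contraTneq exy => ->; rewrite irr.
by rewrite mulr2n mulrDl mul1r.
Qed.

Theorem lemma3 (V : finType) (e : rel V) :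
  simple_graph e -> ~~ odd #|V| -> Hk_cordial 2 e -> ~~ odd #|edges e|.
Proof.
move=> [_ irr] hV [f [He [Hv Hc]]].
have [sV cV] := @sumdec V predT (vlab e f) (fun x _ => Hv x).
have [sE cE] := @sumdec _ (edges e) f He.
have hs' := @hs V e f irr.
have [c1e c1v] := Hc 1%N isT.
have [c2e c2v] := Hc 2%N isT.
have sV' : \sum_v vlab e f v = (vcount e f 1)%:R - (vcount e f (-1))%:R
   + 2 * (vcount e f 2)%:R - 2 * (vcount e f (-2))%:R by exact: sV.
have cV' : (#|V|%:R : int) = (vcount e f 1)%:R + (vcount e f (-1))%:R
   + (vcount e f 2)%:R + (vcount e f (-2))%:R by exact: cV.
have sE' : \sum_(E in edges e) f E = (ecount e f 1)%:R - (ecount e f (-1))%:R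
   + 2 * (ecount e f 2)%:R - 2 * (ecount e f (-2))%:R by exact: sE.
have cE' : (#|edges e|%:R : int) = (ecount e f 1)%:R + (ecount e f (-1))%:R
   + (ecount e f 2)%:R + (ecount e f (-2))%:R by exact: cE.
rewrite sV' sE' in hs'.
have c1e' : `|(ecount e f 1)%:R - (ecount e f (-1))%:R| <= 1 :> int by rewrite !natz; exact: c1e.
have c2e' : `|(ecount e f 2)%:R - (ecount e f (-2))%:R| <= 1 :> int by rewrite !natz; exact: c2e.
have c1v' : `|(vcount e f 1)%:R - (vcount e f (-1))%:R| <= 1 :> int by rewrite !natz; exact: c1v.
have c2v' : `|(vcount e f 2)%:R - (vcount e f (-2))%:R| <= 1 :> int by rewrite !natz; exact: c2v.
move: hs' cV' cE' c1e' c1v' c2e' c2v' hV.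
generalize (ecount e f 1) (ecount e f (-1)) (ecount e f 2) (ecount e f (-2))
  (vcount e f 1) (vcount e f (-1)) (vcount e f 2) (vcount e f (-2)) #|V| #|edges e|.
move=> a1 a2 a3 a4 b1 b2 b3 b4 n m.
rewrite ?natz; lia.
Qed.
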